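(* Let $t_0<\beta\le+\infty$, $J=[t_0,\beta[$, let $D\subset\mathbb{R}^n$ be an open set, let $m\ge 1$, and let $f\colon J\times D^m\to\mathbb{R}^n$ be continuous. Suppose there is a continuous function $k\colon J\to\mathbb{R}$ such that \[ \|F(t,z)-F(t,z')\|\le k(t)\,\|z-z'\|\qquad (t\in J,\ z,z'\in D^m), \] where $F(t,(z_1,\dots,z_m))=f(t,z_1,\dots,z_m)$. Let $g_1,\dots,g_m\colon J\to\mathbb{R}$ be continuous functions such that, for some real number $\gamma\le t_0$, $\gamma\le g_j(t)\le t$ for all $t\in J$ and all $j=1,\dots,m$. Let $\theta\colon[\gamma,t_0]\to D$ be a continuous initial function. Then for every $\beta_1$ with $t_0<\beta_1\le\beta$, the problem \[ x'(t)=f\big(t,x(g_1(t)),\dots,x(g_m(t))\big)\quad (t\in[t_0,\beta_1[),\qquad x(t)=\theta(t)\quad(t\in[\gamma,t_0]) \] has at most one solution on $[\gamma,\beta_1[$.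
   Context: A solution of the problem on $[\gamma,\beta_1[$ is a continuous function $x\colon[\gamma,\beta_1[\to D$ that is differentiable on $[t_0,\beta_1[$ (one-sided at $t_0$), satisfies $x'(t)=f(t,x(g_1(t)),\dots,x(g_m(t)))$ for all $t\in[t_0,\beta_1[$, and satisfies $x(t)=\theta(t)$ for all $t\in[\gamma,t_0]$. The norm $\|\cdot\|$ on $\mathbb{R}^n$ is a fixed norm, and on $D^m\subset(\mathbb{R}^n)^m$ the norm is $\|(z_1,\dots,z_m)\|=\max_{1\le j\le m}\|z_j\|$. *)

(* Defs.v *)
From HB Require Import structures.
From mathcomp Require Import all_boot all_order all_algebra.
From mathcomp Require Import all_classical all_reals all_analysis.
Set Implicit Arguments. Unset Strict Implicit. Unset Printing Implicit Defensive.
Import Order.TTheory GRing.Theory Num.Theory.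
Import numFieldNormedType.Exports.
Local Open Scope classical_set_scope.
Local Open Scope ring_scope.

Definition is_norm (R : realType) (n : nat) (N : 'rV[R]_n -> R) : Prop :=
  [/\ forall x y, N (x + y) <= N x + N y,
      forall (a : R) x, N (a *: x) = `|a| * N x
    & forall x, N x = 0 -> x = 0].

(* The norm on (R^n)^m, points z = (z_1,...,z_m) stored as the rows of an
   m x n matrix: ||z|| = max_j ||z_j||. *)
Definition maxnorm (R : realType) (m n : nat) (N : 'rV[R]_n -> R)
  (z : 'M[R]_(m, n)) : R := \big[Num.max/0]_(j < m) N (row j z).

Definition delay_args (R : realType) (m n : nat) (g : 'I_m -> R -> R)
  (x : R -> 'rV[R]_n) (t : R) : 'M[R]_(m, n) :=
  \matrix_(j < m) x (g j t).

Definition is_solution (R : realType) (n m : nat) (D : set 'rV[R]_n)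
  (f : R -> 'M[R]_(m, n) -> 'rV[R]_n) (g : 'I_m -> R -> R)
  (theta : R -> 'rV[R]_n) (gamma t0 : R) (beta1 : \bar R)
  (x : R -> 'rV[R]_n) : Prop :=
  [/\ {within [set t | gamma <= t /\ (t%:E < beta1)%E], continuous x},
      (forall t, gamma <= t -> (t%:E < beta1)%E -> D (x t)),
      (forall t, t0 < t -> (t%:E < beta1)%E ->
         (fun h : R => h^-1 *: (x (t + h) - x t)) @ 0^' -->
           f t (delay_args g x t)),
      ((fun h : R => h^-1 *: (x (t0 + h) - x t0)) @ 0^'+ -->
           f t0 (delay_args g x t0))
    & (forall t, gamma <= t <= t0 -> x t = theta t)].

(* Main.v *)
Require Import Defs.
From HB Require Import structures.
From mathcomp Require Import all_boot all_order all_algebra.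
From mathcomp Require Import all_classical all_reals all_analysis.
From mathcomp Require Import ring lra.
Import Order.TTheory GRing.Theory Num.Theory.
Import numFieldNormedType.Exports.
Local Open Scope classical_set_scope.
Local Open Scope ring_scope.
Set Implicit Arguments. Unset Strict Implicit.
Lemma normN0 (R : realType) n (N : 'rV[R]_n -> R) : is_norm N -> N 0 = 0.
Proof. case=> _ hZ _; by rewrite -(scale0r (0 : 'rV[R]_n)) hZ normr0 mul0r. Qed.

Lemma normNN (R : realType) n (N : 'rV[R]_n -> R) x : is_norm N -> N (- x) = N x.
Proof. case=> _ hZ _; by rewrite -scaleN1r hZ normrN normr1 mul1r. Qed.

Lemma normN_ge0 (R : realType) n (N : 'rV[R]_n -> R) x : is_norm N -> 0 <= N x.
Proof.
move=> hN; have := normN0 hN; have := normNN x hN; case: hN => hD _ _ hn h0.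
have := hD x (- x); rewrite subrr h0 hn => h.
by rewrite -(@pmulr_rge0 _ 2) // mulr2n mulrDl mul1r.
Qed.

Lemma normN_tri (R : realType) n (N : 'rV[R]_n -> R) x y z : is_norm N ->
  N (x - z) <= N (x - y) + N (y - z).
Proof. case=> hD _ _; have := hD (x - y) (y - z); by rewrite addrA subrK. Qed.

Lemma normN_lip (R : realType) n (N : 'rV[R]_n -> R) x y : is_norm N ->
  `|N x - N y| <= N (x - y).
Proof.
move=> hN; have h1 := normN_tri x y 0 hN; have h2 := normN_tri y x 0 hN.
rewrite !subr0 in h1 h2; rewrite -opprB normNN // in h2.
rewrite ler_norml; apply/andP; split.
  by rewrite lerNl opprB lerBlDr.
by rewrite lerBlDr.
Qed.

Lemma normN_sum (R : realType) n (N : 'rV[R]_n -> R) (I : finType) (F : I -> 'rV[R]_n) :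
  is_norm N -> N (\sum_i F i) <= \sum_i N (F i).
Proof.
move=> hN; apply: (big_ind2 (fun x y => N x <= y)); first by rewrite normN0.
  by move=> a b c d h1 h2; case: hN => hD _ _; apply: le_trans (hD _ _) _; apply: lerD.
by [].
Qed.

Lemma normN_bound (R : realType) n (N : 'rV[R]_n -> R) : is_norm N ->
  exists2 c, 0 < c & forall v, N v <= c * `|v|.
Proof.
move=> hN; exists (1 + \sum_(j < n) N (delta_mx 0 j)).
  apply: (lt_le_trans ltr01); rewrite lerDl; apply: sumr_ge0 => j _; exact: normN_ge0.
move=> v; rewrite {1}(row_sum_delta v); apply: le_trans (normN_sum _ hN) _.
rewrite mulrDl mul1r mulr_suml; apply: ler_wpDl; first exact: normr_ge0.
apply: ler_sum => j _; case: (hN) => _ hZ _; rewrite hZ mulrC ler_wpM2l //.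
  exact: normN_ge0.
rewrite -[`|v|]/(mx_norm v) mx_normrE; exact: (le_bigmax _ (fun ij : 'I_1 * 'I_n => `|v ij.1 ij.2|) (0, j)).
Qed.
Lemma within_eps (R : realType) (V : normedModType R) (h : R -> V) (A : set R) r :
  {within A, continuous h} -> A r -> forall e, 0 < e ->
  exists2 d, 0 < d & forall u, A u -> `|u - r| < d -> `|h u - h r| < e.
Proof.
move=> /subspace_continuousP hc Ar e e0.
have := hc r Ar; move/cvgrPdist_lt => /(_ e e0).
rewrite near_withinE => /nbhs_ballP [d /= d0 hd].
exists d => // u Au ur; rewrite distrC; apply: (hd u) => //.
by rewrite -ball_normE /ball_ /= distrC.
Qed.

Lemma right_eps (R : realType) (V : normedModType R) (q : R -> V) L :
  q @ 0^'+ --> L -> forall e, 0 < e ->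
  exists2 d, 0 < d & forall h, 0 < h -> h < d -> `|q h - L| < e.
Proof.
move=> /cvgrPdist_lt hc e e0; have := hc e e0.
rewrite near_withinE => /nbhs_ballP [d /= d0 hd].
exists d => // u u0 ud; rewrite distrC; apply: (hd u) => //.
by rewrite -ball_normE /ball_ /= sub0r normrN gtr0_norm.
Qed.

Lemma contN_comp (R : realType) n (N : 'rV[R]_n -> R) (w : R -> 'rV[R]_n) (A : set R) :
  is_norm N -> {within A, continuous w} -> {within A, continuous (fun t => N (w t))}.
Proof.
move=> hN /subspace_continuousP hw; apply/subspace_continuousP => x Ax.
have [c c0 hc] := normN_bound hN.
apply/(cvgrPdist_lt (FF := within_filter A (nbhs_filter x))) => e e0.
have := (cvgrPdist_lt _ _).1 (hw x Ax) (e / c) (divr_gt0 e0 c0).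
move=> H; near=> u.
apply: le_lt_trans (normN_lip _ _ hN) _.
apply: le_lt_trans (hc _) _.
rewrite -ltr_pdivlMl // mulrC; near: u; exact: H.
Unshelve. all: by end_near.
Qed.

Lemma mvt_eps (R : realType) n (N : 'rV[R]_n -> R) (w : R -> 'rV[R]_n) a b C e :
  is_norm N -> a < b -> 0 <= C ->
  {within `[a, b], continuous w} ->
  (forall r, a <= r -> r < b -> exists L,
     (fun h => h^-1 *: (w (r + h) - w r)) @ 0^'+ --> L /\ N L <= C) ->
  0 < e -> N (w b - w a) <= (C + e) * (b - a) + e.
Proof.
move=> hN ab C0 wc hd e0.
have [c c0 hc] := normN_bound hN.
have Ce0 : 0 <= C + e by lra.
pose P t := N (w t - w a) <= (C + e) * (t - a) + e.
pose A := [set t | (a <= t <= b) /\ forall u, a <= u <= t -> P u].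
have Aa : A a.
  split; first by rewrite lexx ltW.
  move=> u /andP[h1 h2]; have -> : u = a by apply/le_anti; rewrite h1 h2.
  by rewrite /P subrr normN0 // subrr mulr0 add0r ltW.
have hs : has_sup A.
  split; first by exists a.
  by exists b => t [/andP[_ ?] _].
set s := sup A.
have as_ : a <= s := sup_upper_bound hs Aa.
have sb : s <= b.
  by apply: ge_sup; [exists a | move=> t [/andP[_ ?] _]].
have Pbelow : forall u, a <= u -> u < s -> P u.
  move=> u au us.
  have su0 : 0 < s - u by rewrite subr_gt0.
  have [t At ut] := sup_adherent su0 hs.
  apply: At.2; rewrite au /=; move: ut; rewrite /s; lra.
have Ps : P s.
  case: (eqVneq s a) => [-> | sa]; first by apply: Aa.2; rewrite lexx.
  have as' : a < s by rewrite lt_neqAle eq_sym sa as_.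
  apply/ler_addgt0Pr => g g0.
  have sab : [set` `[a, b]] s by rewrite /= in_itv /= as_ sb.
  have [d d0 hd'] := within_eps wc sab (divr_gt0 g0 c0).
  pose u := Num.max a (s - d / 2).
  have au : a <= u by rewrite /u le_max lexx.
  have us : u < s by rewrite /u gt_max as' /=; lra.
  have ud : `|u - s| < d.
    rewrite ltr0_norm ?subr_lt0 // opprB.
    have : s - d / 2 <= u by rewrite /u le_max lexx orbT.
    lra.
  have uab : [set` `[a, b]] u by rewrite /= in_itv /= au /=; apply: ltW; apply: lt_le_trans us sb.
  have hPu := Pbelow u au us.
  have h1 := normN_tri (w s) (w u) (w a) hN.
  have h2 : N (w s - w u) < g.
    rewrite -opprB normNN //; apply: le_lt_trans (hc _) _.
    by rewrite -ltr_pdivlMl // mulrC; apply: hd'.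
  have h3 : (C + e) * (u - a) <= (C + e) * (s - a) by apply: ler_wpM2l => //; lra.
  rewrite /P in hPu *; lra.
have sA : A s.
  split; first by rewrite as_ sb.
  move=> u /andP[au us]; case: (ltP u s) => [lt|ge]; first exact: Pbelow.
  by have -> : u = s by apply/le_anti; rewrite us ge.
have sb' : s = b.
  apply/eqP; rewrite eq_le sb /= leNgt; apply/negP => slt.
  have [L [hL NL]] := hd s as_ slt.
  have [d d0 hd2] := right_eps hL (divr_gt0 e0 c0).
  have key : forall h', 0 < h' -> h' < d -> N (w (s + h') - w s) <= h' * (C + e).
    move=> h' h0 hd3.
    have -> : w (s + h') - w s = h' *: (h'^-1 *: (w (s + h') - w s)).
      by rewrite scalerA mulfV ?gt_eqF // scale1r.
    case: (hN) => _ hZ _; rewrite hZ gtr0_norm //; apply: ler_wpM2l; first exact: ltW.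
    have t1 := normN_tri (h'^-1 *: (w (s + h') - w s)) L 0 hN.
    rewrite !subr0 in t1; apply: le_trans t1 _; rewrite addrC; apply: lerD => //.
    apply: ltW; apply: le_lt_trans (hc _) _.
    by rewrite -ltr_pdivlMl // mulrC; apply: hd2.
  pose h := Num.min d (b - s) / 2.
  have hmin1 : Num.min d (b - s) <= d by rewrite ge_min lexx.
  have hmin2 : Num.min d (b - s) <= b - s by rewrite ge_min lexx orbT.
  have hmin0 : 0 < Num.min d (b - s) by rewrite lt_min d0 subr_gt0 slt.
  have h0 : 0 < h by rewrite /h; lra.
  have hd3 : h < d by rewrite /h; lra.
  have hb : s + h <= b by rewrite /h; lra.
  have : A (s + h).
    split; first by rewrite hb andbT; lra.
    move=> u /andP[au ush]; case: (leP u s) => [us|su]; first by apply: sA.2; rewrite au us.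
    have us0 : 0 < u - s by rewrite subr_gt0.
    have k := key (u - s) us0 ltac:(lra).
    have eu : s + (u - s) = u by rewrite addrCA subrr addr0.
    rewrite eu in k.
    have t1 := normN_tri (w u) (w s) (w a) hN.
    have t2 : P s := Ps.
    rewrite /P in t2 *.
    have : (u - s) * (C + e) + (C + e) * (s - a) = (C + e) * (u - a) by rewrite mulrC -mulrDr addrA subrK.
    lra.
  move/(sup_upper_bound hs); rewrite -/s; lra.
rewrite -sb'; exact: Ps.
Qed.

Lemma mvt_N (R : realType) n (N : 'rV[R]_n -> R) (w : R -> 'rV[R]_n) a b C :
  is_norm N -> a < b -> 0 <= C ->
  {within `[a, b], continuous w} ->
  (forall r, a <= r -> r < b -> exists L,
     (fun h => h^-1 *: (w (r + h) - w r)) @ 0^'+ --> L /\ N L <= C) ->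
  N (w b - w a) <= C * (b - a).
Proof.
move=> hN ab C0 wc hd; apply/ler_addgt0Pr => g g0.
have ba0 : 0 < b - a + 1 by lra.
have e0 : 0 < g / (b - a + 1) by apply: divr_gt0.
apply: le_trans (mvt_eps hN ab C0 wc hd e0) _.
have -> : (C + g / (b - a + 1)) * (b - a) + g / (b - a + 1) =
   C * (b - a) + g / (b - a + 1) * (b - a + 1).
  by rewrite mulrDl [_ * (b - a + 1)]mulrDr mulr1 addrA.
by rewrite mulfVK ?gt_eqF.
Qed.

Lemma dnbhs_right (R : realType) (V : normedModType R) (q : R -> V) (L : V) :
  q @ (0:R)^' --> (L : V) -> q @ (0:R)^'+ --> L.
Proof.
move=> H U HU; have := H U HU; rewrite /at_right /dnbhs /= /within /=.
move=> /nbhs_ballP [d d0 hd]; apply/nbhs_ballP; exists d => // h hb h0.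
by apply: hd => //; exact: lt0r_neq0.
Qed.
Unset Implicit Arguments. Set Strict Implicit.
Theorem mainTheorem1 (R : realType) (n m : nat) (N : 'rV[R]_n -> R)
  (t0 : R) (beta : \bar R) (D : set 'rV[R]_n)
  (f : R -> 'M[R]_(m, n) -> 'rV[R]_n) (k : R -> R)
  (g : 'I_m -> R -> R) (gamma : R) (theta : R -> 'rV[R]_n) (beta1 : \bar R) :
  is_norm N ->
  (0 < m)%N ->
  (t0%:E < beta)%E ->
  open D ->
  {within [set p : R * 'M[R]_(m, n) |
            (t0 <= p.1 /\ (p.1%:E < beta)%E) /\ forall j, D (row j p.2)],
    continuous (fun p => f p.1 p.2)} ->
  {within [set t | t0 <= t /\ (t%:E < beta)%E], continuous k} ->
  (forall t (z z' : 'M[R]_(m, n)), t0 <= t -> (t%:E < beta)%E ->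
     (forall j, D (row j z)) -> (forall j, D (row j z')) ->
     N (f t z - f t z') <= k t * maxnorm N (z - z')) ->
  (forall j, {within [set t | t0 <= t /\ (t%:E < beta)%E], continuous (g j)}) ->
  gamma <= t0 ->
  (forall j t, t0 <= t -> (t%:E < beta)%E -> gamma <= g j t <= t) ->
  {within `[gamma, t0], continuous theta} ->
  (forall t, gamma <= t <= t0 -> D (theta t)) ->
  (t0%:E < beta1)%E -> (beta1 <= beta)%E ->
  forall x y : R -> 'rV[R]_n,
    is_solution D f g theta gamma t0 beta1 x ->
    is_solution D f g theta gamma t0 beta1 y ->
    forall t, gamma <= t -> (t%:E < beta1)%E -> x t = y t.
Proof.
move=> hN m0 t0b Dopen fc kc hLip gc gat0 gbnd thc thD t0b1 b1b x y
  [xc xD xd xd0 xth] [yc yD yd yd0 yth].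
pose dom := [set t | gamma <= t /\ (t%:E < beta1)%E].
pose w t := x t - y t.
have wc : {within dom, continuous w}.
  by move=> p; apply: continuousB; [exact: xc | exact: yc].
have w0 : forall u, gamma <= u <= t0 -> w u = 0.
  by move=> u hu; rewrite /w xth // yth // subrr.
have wD : forall t, w t = 0 -> x t = y t.
  by move=> t /eqP; rewrite subr_eq0 => /eqP.
move=> t gt tb1.
case: (leP t t0) => [tt0|t0t]; first by apply: wD; apply: w0; rewrite gt tt0.
apply: wD.
have lt_beta1 : forall u, u <= t -> (u%:E < beta1)%E.
  by move=> u ut; apply: le_lt_trans tb1; rewrite lee_fin.
have lt_beta : forall u, u <= t -> (u%:E < beta)%E.
  by move=> u ut; apply: lt_le_trans (lt_beta1 u ut) b1b.
have kc' : {within `[t0, t], continuous k}.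
  apply: continuous_subspaceW kc => u /=; rewrite in_itv /= => /andP[h1 h2].
  by split => //; exact: lt_beta.
have [cm cmi kmax] := EVT_max (ltW t0t) kc'.
pose K := Num.max 1 (k cm).
have K1 : 1 <= K by rewrite le_max lexx.
have kK : forall r, t0 <= r <= t -> k r <= K.
  move=> r hr; apply: le_trans (kmax r _) _; first by rewrite in_itv /=.
  by rewrite le_max lexx orbT.
pose del := (2 * K)^-1.
have del0 : 0 < del by rewrite invr_gt0; lra.
have K0 : 0 < K by lra.
have Kdel : K * del = 2^-1 by rewrite /del invfM mulrCA mulfV ?mulr1 // gt_eqF.
have step : forall s, t0 <= s <= t -> (forall u, gamma <= u <= s -> w u = 0) ->
    forall u, gamma <= u <= Num.min (s + del) t -> w u = 0.
  move=> s /andP[t0s st] hs0.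
  set t1 := Num.min (s + del) t.
  have t1t : t1 <= t by rewrite ge_min lexx orbT.
  have t1s : t1 <= s + del by rewrite ge_min lexx.
  case: (leP t1 s) => [t1s' | st1].
    move=> u /andP[gu ut1]; apply: hs0; rewrite gu; exact: le_trans ut1 t1s'.
  have wc1 : forall a b, s <= a -> b <= t -> {within `[a, b], continuous w}.
    move=> a b sa bt; apply: continuous_subspaceW wc => u /=.
    rewrite in_itv /= => /andP[h1 h2].
    by split; [lra | apply: lt_beta1; lra].
  have [cmx cmxi wmax] := EVT_max (ltW st1) (contN_comp hN (wc1 s t1 (lexx s) t1t)).
  move: cmxi; rewrite in_itv /= => /andP[scm cmt1].
  have B0 : 0 <= N (w cmx) := normN_ge0 _ hN.
  have Ble0 : N (w cmx) <= 0.
    case: (eqVneq cmx s) => [-> | cms].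
      by rewrite hs0 ?normN0 // lexx andbT; lra.
    have scm' : s < cmx by rewrite lt_neqAle eq_sym cms scm.
    have KB0 : 0 <= K * N (w cmx) by apply: mulr_ge0 => //; lra.
    have hm := mvt_N hN scm' KB0 (wc1 s cmx (lexx s) (le_trans cmt1 t1t)).
    have hm' : N (w cmx - w s) <= K * N (w cmx) * (cmx - s).
      apply: hm => r sr rcm.
      have t0r : t0 <= r by lra.
      have rt : r <= t by lra.
      have t0r' : (t0 < r) || (t0 == r) by rewrite orbC -le_eqVlt.
      exists (f r (delay_args g x r) - f r (delay_args g y r)); split.
        have -> : (fun h => h^-1 *: (w (r + h) - w r)) =
            (fun h => h^-1 *: (x (r + h) - x r) - h^-1 *: (y (r + h) - y r)).
          apply/funext => h /=; rewrite /w -scalerBr; congr (_ *: _).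
          by rewrite !opprB addrACA [RHS]addrACA [- x r + _]addrC.
        apply: cvgB.
          case/orP: t0r' => [t0r'|/eqP <-]; last exact: xd0.
          by apply: dnbhs_right; apply: xd => //; apply: lt_beta1.
        case/orP: t0r' => [t0r'|/eqP <-]; last exact: yd0.
        by apply: dnbhs_right; apply: yd => //; apply: lt_beta1.
      have gD : forall (z : R -> 'rV[R]_n), (forall u, gamma <= u -> (u%:E < beta1)%E -> D (z u)) ->
          forall j, D (row j (delay_args g z r)).
        move=> z zD j; rewrite /delay_args rowK.
        have /andP[h1 h2] := gbnd j r t0r (lt_beta r rt).
        by apply: zD => //; apply: lt_beta1; lra.
      apply: le_trans (hLip r _ _ t0r (lt_beta r rt) (gD x xD) (gD y yD)) _.
      have Mle : maxnorm N (delay_args g x r - delay_args g y r) <= N (w cmx).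
        rewrite /maxnorm; apply: bigmax_le => // j _.
        rewrite /delay_args linearB /= !rowK -/(w (g j r)).
        have /andP[h1 h2] := gbnd j r t0r (lt_beta r rt).
        case: (leP (g j r) s) => [gs|sg]; first by rewrite hs0 ?normN0 // h1 gs.
        by apply: wmax; rewrite in_itv /= (ltW sg) /=; lra.
      have M0 : 0 <= maxnorm N (delay_args g x r - delay_args g y r).
        rewrite /maxnorm; apply: le_trans (normN_ge0 (row (Ordinal m0) (delay_args g x r - delay_args g y r)) hN) _.
        exact: (le_bigmax _ (fun j => N (row j (delay_args g x r - delay_args g y r))) (Ordinal m0)).
      apply: le_trans (ler_wpM2r M0 (kK r _)) _; first by rewrite t0r rt.
      by apply: ler_wpM2l => //; lra.
    rewrite (hs0 s) ?subr0 in hm'; last by rewrite lexx andbT; lra.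
    have h1 : K * (cmx - s) <= 2^-1.
      rewrite -Kdel; apply: ler_wpM2l; lra.
    have h2 : N (w cmx) <= N (w cmx) * 2^-1.
      apply: le_trans hm' _; rewrite mulrAC mulrC; have := ler_wpM2l B0 h1; by [].
    lra.
  move=> u /andP[gu ut1]; case: (leP u s) => [us|su]; first by apply: hs0; rewrite gu us.
  have hu : N (w u) <= N (w cmx) by apply: wmax; rewrite in_itv /= (ltW su) ut1.
  case: (hN) => _ _ hdef; apply: hdef; apply/le_anti.
  by rewrite normN_ge0 // andbT; lra.
have ind : forall j : nat, forall u, gamma <= u <= Num.min (t0 + j%:R * del) t -> w u = 0.
  elim=> [|j IH].
    move=> u /andP[gu ut]; apply: w0; rewrite gu /=; rewrite mul0r addr0 in ut.
    by apply: le_trans ut _; rewrite ge_min lexx.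
  move=> u /andP[gu hu]; apply: (step (Num.min (t0 + j%:R * del) t)).
  - have jd : 0 <= j%:R * del by apply: mulr_ge0 => //; exact: ltW.
    by rewrite le_min ge_min lexx orbT andbT; apply/andP; split; lra.
  - exact: IH.
  - move: hu; rewrite !le_min => /andP[h1 h2]; rewrite gu h2 andbT /=.
    rewrite -lerBlDr le_min; rewrite -addn1 natrD mulrDl mul1r in h1.
    by apply/andP; split; lra.
have tt0 : 0 <= (t - t0) / del by apply: divr_ge0; lra.
have hb := archi_boundP tt0.
apply: (ind (Num.Def.archi_bound ((t - t0) / del))).
rewrite gt /= le_min lexx andbT.
rewrite ltr_pdivrMr // in hb; lra.
Qed.
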